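(* Let $\mathcal M=(M,<,+,0,\ldots)$ be a definably complete locally o-minimal expansion of an ordered group. Let $(G,\tau_G)$ be a definable topological group and $H$ a definable normal subgroup of $G$, with $\tau_H$ the relative topology on $H$. If both the definable topological space $(H,\tau_H)$ and the definable quotient group $(G/H,\tau_Q)$ are definably compact, then $(G,\tau_G)$ is definably compact.
   Context: ''Definable'' means definable in $\mathcal M$ with parameters. $\mathcal M$ is an expansion of an ordered group with dense order without endpoints; locally o-minimal: for every definable $X\subseteq M$ and $a\in M$ there is an open interval $I\ni a$ with $X\cap I$ a finite union of points and open intervals; definably complete: every definable subset of $M$ has sup and inf in $M\cup\{\pm\infty\}$. A family $\{S_t:t\in T\}$ is definable if $\bigcup_t \{t\}\times S_t$ and $T$ are definable. A definable topological space is a definable set with a topology having a definable family as open base; it is definably compact if every definable filtered family (for any two members there is a member contained in their intersection) of nonempty closed subsets has nonempty intersection. A definable topological group is a definable group with a definable topology making multiplication and inversion continuous. For a definable continuous action of $H$ on $G$ (here by left multiplication), the definable quotient is a definable topological space $(Q,\tau_Q)$ with a definable continuous map $\pi:G\to Q$ such that every definable continuous map $\varphi$ from $G$ to a definable topological space which is constant on $H$-orbits factors uniquely as $\varphi=\psi\circ\pi$ with $\psi$ definable continuous; it exists and is unique up to definable homeomorphism (concretely: $Q$ a definable set meeting each coset $Hg$ in exactly one point, $\pi$ sending $g$ to that point, and $S\subseteq Q$ open iff $\pi^{-1}(S)$ open). When $H$ is normal, $Q=G/H$ is a definable topological group with multiplication $g_1H\cdot g_2H=g_1g_2H$, called the definable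 quotient group. *)

(* Defs.v *)
From mathcomp Require Import all_boot.
Set Implicit Arguments. Unset Strict Implicit. Unset Printing Implicit Defensive.

(* A first-order expansion M of an ordered group, presented (as in van den   *)
(* Dries) by the collection Def n of its definable-with-parameters subsets   *)
(* of M^n, where M^n is represented by 'I_n -> M.                            *)

Record ostructure := OStructure {
  carrier :> Type;
  olt : carrier -> carrier -> Prop;
  oadd : carrier -> carrier -> carrier;
  oopp : carrier -> carrier;
  ozero : carrier;
  Def : forall n : nat, (('I_n -> carrier) -> Prop) -> Prop
}.

Definition vec (M : ostructure) (n : nat) := 'I_n -> carrier M.

Definition ordered_group_axioms (M : ostructure) : Prop :=
  [/\ (forall x : M, ~ olt x x),
      (forall x y z : M, olt x y -> olt y z -> olt x z)
    & (forall x y : M, olt x y \/ x = y \/ olt y x)] /\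
  [/\ (forall x y z : M, oadd x (oadd y z) = oadd (oadd x y) z),
      (forall x : M, oadd (ozero M) x = x /\ oadd x (ozero M) = x),
      (forall x : M, oadd (oopp x) x = ozero M /\ oadd x (oopp x) = ozero M)
    & (forall x y z : M, olt x y -> olt (oadd z x) (oadd z y) /\ olt (oadd x z) (oadd y z))].

Definition dense_no_endpoints (M : ostructure) : Prop :=
  (forall x y : M, olt x y -> exists z, olt x z /\ olt z y) /\
  (forall x : M, exists y z, olt y x /\ olt x z).

(* Def is the family of sets definable with parameters in some expansion of *)
(* (M, <, +, 0): closed under boolean operations, coordinate substitutions  *)
(* (preimages under coordinate maps) and projections (images under          *)
(* coordinate maps, i.e. existential quantification), containing equality, *)
(* the order, the graph of +, and every singleton (parameters).             *)
Record structure_axioms (M : ostructure) : Prop := {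
  def_ext : forall n (A B : vec M n -> Prop),
      (forall x, A x <-> B x) -> Def A -> Def B;
  def_compl : forall n (A : vec M n -> Prop), Def A -> Def (fun x => ~ A x);
  def_union : forall n (A B : vec M n -> Prop),
      Def A -> Def B -> Def (fun x => A x \/ B x);
  def_preim : forall n m (f : 'I_m -> 'I_n) (A : vec M m -> Prop),
      Def A -> Def (fun x : vec M n => A (fun i => x (f i)));
  def_proj : forall n m (f : 'I_m -> 'I_n) (A : vec M n -> Prop),
      Def A -> Def (fun y : vec M m => exists x, A x /\ forall i, x (f i) = y i);
  def_eq : forall n (i j : 'I_n), Def (fun x : vec M n => x i = x j);
  def_lt : forall n (i j : 'I_n), Def (fun x : vec M n => olt (x i) (x j));
  def_add : forall n (i j k : 'I_n),
      Def (fun x : vec M n => oadd (x i) (x j) = x k);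
  def_const : forall n (i : 'I_n) (a : M), Def (fun x : vec M n => x i = a)
}.

Definition at0 (M : ostructure) (X : M -> Prop) : vec M 1 -> Prop :=
  fun x => X (x ord0).

Definition def_complete (M : ostructure) : Prop :=
  forall X : M -> Prop, Def (at0 X) ->
    ((exists x, X x) -> (exists b, forall x, X x -> ~ olt b x) ->
       exists s, (forall x, X x -> ~ olt s x) /\
                 (forall b, (forall x, X x -> ~ olt b x) -> ~ olt b s)) /\
    ((exists x, X x) -> (exists b, forall x, X x -> ~ olt x b) ->
       exists s, (forall x, X x -> ~ olt x s) /\
                 (forall b, (forall x, X x -> ~ olt x b) -> ~ olt s b)).

Definition loc_ominimal (M : ostructure) : Prop :=
  forall (X : M -> Prop) (a : M), Def (at0 X) ->
    exists b c, olt b a /\ olt a c /\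
      exists (np : nat) (pts : 'I_np -> M) (ni : nat) (l r : 'I_ni -> M),
        forall x, (X x /\ olt b x /\ olt x c) <->
                  ((exists i, x = pts i) \/ (exists j, olt (l j) x /\ olt x (r j))).

Definition DCLOM (M : ostructure) : Prop :=
  [/\ ordered_group_axioms M, dense_no_endpoints M, structure_axioms M,
      def_complete M & loc_ominimal M].

Definition lpart (M : ostructure) n m (z : vec M (n + m)) : vec M n :=
  fun j => z (lshift m j).
Definition rpart (M : ostructure) n m (z : vec M (n + m)) : vec M m :=
  fun j => z (rshift n j).

Definition def_family (M : ostructure) k n
    (T : vec M k -> Prop) (S : vec M k -> vec M n -> Prop) : Prop :=
  Def T /\ Def (fun z : vec M (k + n) => T (lpart z) /\ S (lpart z) (rpart z)).

Definition def_map (M : ostructure) n m (X : vec M n -> Prop)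
    (f : vec M n -> vec M m) : Prop :=
  Def X /\
  Def (fun z : vec M (n + m) => X (lpart z) /\ forall i, rpart z i = f (lpart z) i).

Definition def_base (M : ostructure) n k (X : vec M n -> Prop)
    (T : vec M k -> Prop) (B : vec M k -> vec M n -> Prop) : Prop :=
  [/\ def_family T B,
      (forall t x, T t -> B t x -> X x),
      (forall x, X x -> exists t, T t /\ B t x)
    & (forall s t x, T s -> T t -> B s x -> B t x ->
         exists r, T r /\ B r x /\ forall y, B r y -> B s y /\ B t y)].

Definition bopen (M : ostructure) n k (X : vec M n -> Prop)
    (T : vec M k -> Prop) (B : vec M k -> vec M n -> Prop)
    (U : vec M n -> Prop) : Prop :=
  (forall x, U x -> X x) /\
  (forall x, U x -> exists t, T t /\ B t x /\ forall y, B t y -> U y).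

Definition def_compact (M : ostructure) n (X : vec M n -> Prop)
    (isopen : (vec M n -> Prop) -> Prop) : Prop :=
  forall k (S : vec M k -> Prop) (C : vec M k -> vec M n -> Prop),
    def_family S C ->
    (exists s, S s) ->
    (forall s, S s -> (forall x, C s x -> X x) /\ isopen (fun x => X x /\ ~ C s x)) ->
    (forall s, S s -> exists x, C s x) ->
    (forall s t, S s -> S t -> exists r, S r /\ forall x, C r x -> C s x /\ C t x) ->
    exists x, X x /\ forall s, S s -> C s x.

Definition is_group (M : ostructure) n (G : vec M n -> Prop)
    (mul : vec M n -> vec M n -> vec M n) (inv : vec M n -> vec M n)
    (e : vec M n) : Prop :=
  [/\ G e,
      (forall x y, G x -> G y -> G (mul x y))
    & (forall x, G x -> G (inv x))] /\
  [/\ 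
      (forall x y z, G x -> G y -> G z -> mul x (mul y z) = mul (mul x y) z),
      (forall x, G x -> mul e x = x /\ mul x e = x)
    & (forall x, G x -> mul (inv x) x = e /\ mul x (inv x) = e)].

Definition is_def_topgroup (M : ostructure) n k (G : vec M n -> Prop)
    (mul : vec M n -> vec M n -> vec M n) (inv : vec M n -> vec M n)
    (e : vec M n) (T : vec M k -> Prop) (B : vec M k -> vec M n -> Prop) : Prop :=
  [/\ Def G,
      is_group G mul inv e,
      def_map (fun z : vec M (n + n) => G (lpart z) /\ G (rpart z))
              (fun z => mul (lpart z) (rpart z)),
      def_map G inv
    & def_base G T B] /\
  (
      (forall x y, G x -> G y -> forall W, bopen G T B W -> W (mul x y) ->
         exists U V, [/\ bopen G T B U, bopen G T B V, U x, V y &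
                         forall u v, U u -> V v -> W (mul u v)])
    /\
      (forall x, G x -> forall W, bopen G T B W -> W (inv x) ->
         exists U, [/\ bopen G T B U, U x & forall u, U u -> W (inv u)])).

Definition is_def_normal_subgroup (M : ostructure) n (G H : vec M n -> Prop)
    (mul : vec M n -> vec M n -> vec M n) (inv : vec M n -> vec M n)
    (e : vec M n) : Prop :=
  [/\ Def H, (forall x, H x -> G x) & H e] /\
  [/\ 
      (forall x y, H x -> H y -> H (mul x y)),
      (forall x, H x -> H (inv x))
    & (forall g h, G g -> H h -> H (mul (mul g h) (inv g)))].

Definition rel_open (M : ostructure) n k (G H : vec M n -> Prop)
    (T : vec M k -> Prop) (B : vec M k -> vec M n -> Prop)
    (U : vec M n -> Prop) : Prop :=
  exists V, bopen G T B V /\ forall x, U x <-> V x /\ H x.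

Definition in_coset (M : ostructure) n (H : vec M n -> Prop)
    (mul : vec M n -> vec M n -> vec M n) (g q : vec M n) : Prop :=
  exists h, H h /\ q = mul h g.

Definition def_transversal (M : ostructure) n (G H Q : vec M n -> Prop)
    (mul : vec M n -> vec M n -> vec M n) : Prop :=
  [/\ Def Q, (forall q, Q q -> G q)
    & (forall g, G g -> exists q, [/\ Q q, in_coset H mul g q &
                                   forall q', Q q' -> in_coset H mul g q' -> q' = q])].

(* quotient topology tau_Q on Q: S open iff pi^-1(S) is open in G, where    *)
(* pi(g) is the unique point of Q in H g.                                    *)
Definition quot_open (M : ostructure) n k (G H Q : vec M n -> Prop)
    (mul : vec M n -> vec M n -> vec M n)
    (T : vec M k -> Prop) (B : vec M k -> vec M n -> Prop)
    (S : vec M n -> Prop) : Prop :=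
  (forall q, S q -> Q q) /\
  bopen G T B (fun g => G g /\ exists q, [/\ Q q, S q & in_coset H mul g q]).

(* Main.v *)
Require Import Defs.
From mathcomp Require Import all_boot.
From Stdlib Require Import Classical FunctionalExtensionality.
Set Implicit Arguments. Unset Strict Implicit. Unset Printing Implicit Defensive.

Section Tool.
Variable M : ostructure.
Hypothesis hM : structure_axioms M.

Definition concat N p (y : vec M N) (z : vec M p) : vec M (N + p) :=
  fun i => match split i with inl a => y a | inr b => z b end.
Definition comb N a b (s1 : 'I_a -> 'I_N) (s2 : 'I_b -> 'I_N) : 'I_(a + b) -> 'I_N :=
  fun i => match split i with inl j => s1 j | inr j => s2 j end.

Lemma split_l a b (j : 'I_a) : split (lshift b j) = inl j.
Proof. exact: (unsplitK (inl j : 'I_a + 'I_b)). Qed.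
Lemma split_r a b (j : 'I_b) : split (rshift a j) = inr j.
Proof. exact: (unsplitK (inr j : 'I_a + 'I_b)). Qed.

Lemma lpart_concat N p (y : vec M N) (z : vec M p) : lpart (concat y z) = y.
Proof. apply: functional_extensionality => j; by rewrite /lpart /concat split_l. Qed.
Lemma rpart_concat N p (y : vec M N) (z : vec M p) : rpart (concat y z) = z.
Proof. apply: functional_extensionality => j; by rewrite /rpart /concat split_r. Qed.

Lemma lpart_comb N a b s1 s2 (x : vec M N) :
  lpart (fun i => x (@comb N a b s1 s2 i)) = (fun i => x (s1 i)).
Proof. apply: functional_extensionality => j; by rewrite /lpart /comb split_l. Qed.
Lemma rpart_comb N a b s1 s2 (x : vec M N) :
  rpart (fun i => x (@comb N a b s1 s2 i)) = (fun i => x (s2 i)).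
Proof. apply: functional_extensionality => j; by rewrite /rpart /comb split_r. Qed.

Lemma defE N (A B : vec M N -> Prop) : Def A -> (forall x, A x <-> B x) -> Def B.
Proof. move=> dA h; exact: (def_ext hM h dA). Qed.

Lemma def_not N (A : vec M N -> Prop) : Def A -> Def (fun x => ~ A x).
Proof. exact: def_compl. Qed.

Lemma def_and N (A B : vec M N -> Prop) : Def A -> Def B -> Def (fun x => A x /\ B x).
Proof.
move=> dA dB; apply: defE (def_not (def_union hM (def_not dA) (def_not dB))) _.
move=> x; split; [move=> h; split; apply: NNPP => c; apply: h; tauto | tauto].
Qed.

Lemma def_imp N (A B : vec M N -> Prop) : Def A -> Def B -> Def (fun x => A x -> B x).
Proof.
move=> dA dB; apply: defE (def_union hM (def_not dA) dB) _.
move=> x; split; [tauto | move=> h; case: (classic (A x)); tauto].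
Qed.

Lemma def_exv N p (A : vec M N -> vec M p -> Prop) :
  Def (fun w : vec M (N + p) => A (lpart w) (rpart w)) -> Def (fun y => exists z, A y z).
Proof.
move=> dA; apply: defE (def_proj hM (lshift p) dA) _ => y; split.
  case=> x [hx ex]; exists (rpart x).
  have -> : y = lpart x by apply: functional_extensionality => i; rewrite -ex.
  done.
case=> z hz; exists (concat y z); rewrite lpart_concat rpart_concat; split=> //.
by move=> i; rewrite /concat split_l.
Qed.

Lemma def_allv N p (A : vec M N -> vec M p -> Prop) :
  Def (fun w : vec M (N + p) => A (lpart w) (rpart w)) -> Def (fun y => forall z, A y z).
Proof.
move=> dA; apply: defE (def_not (@def_exv N p (fun y z => ~ A y z) (def_not dA))) _ => y; split.
  by move=> h z; apply: NNPP => c; apply: h; exists z.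
by move=> h [z nz]; exact: nz (h z).
Qed.

Lemma def_pre2 N a b (A : vec M a -> vec M b -> Prop) (s1 : 'I_a -> 'I_N) (s2 : 'I_b -> 'I_N) :
  Def (fun z : vec M (a + b) => A (lpart z) (rpart z)) ->
  Def (fun x : vec M N => A (fun i => x (s1 i)) (fun i => x (s2 i))).
Proof.
move=> dA; apply: defE (def_preim hM (comb s1 s2) dA) _ => x.
by rewrite lpart_comb rpart_comb.
Qed.

Lemma def_true N : Def (fun _ : vec M N => True).
Proof.
have := def_proj hM (lshift 1) (def_eq hM (rshift N (ord0 : 'I_1)) (rshift N ord0)).
move=> d; apply: defE d _ => y; split=> // _.
exists (concat y (fun _ => ozero M)); split=> // i; by rewrite /concat split_l.
Qed.

Lemma def_allord N n (P : 'I_n -> vec M N -> Prop) :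
  (forall i, Def (P i)) -> Def (fun x => forall i, P i x).
Proof.
move=> dP.
suff: forall l : seq 'I_n, Def (fun x => forall i, i \in l -> P i x).
  move=> /(_ (enum 'I_n)) d; apply: defE d _ => x; split.
    by move=> h i; apply: h; rewrite mem_enum.
  by move=> h i _; apply: h.
elim=> [|a l IH].
  by apply: defE (def_true N) _ => x; split=> // _ i; rewrite in_nil.
apply: defE (def_and (dP a) IH) _ => x; split.
  by case=> h1 h2 i; rewrite in_cons => /orP [/eqP -> //|]; apply: h2.
move=> h; split; first by apply: h; rewrite in_cons eqxx.
by move=> i il; apply: h; rewrite in_cons il orbT.
Qed.

Lemma def_cst N n (s : 'I_n -> 'I_N) (q : vec M n) :
  Def (fun x : vec M N => (fun i => x (s i)) = q).
Proof.
have := def_allord (fun i => def_const hM (s i) (q i)).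
move=> d; apply: defE d _ => x; split.
  by move=> h; apply: functional_extensionality.
by move=> <-.
Qed.

Lemma def_sel N n (A : vec M n -> Prop) (s : 'I_n -> 'I_N) :
  Def A -> Def (fun x : vec M N => A (fun i => x (s i))).
Proof. exact: def_preim. Qed.

End Tool.

Section Defn.
Variables (M : ostructure) (n k p : nat) (G H Q : vec M n -> Prop)
  (mul : vec M n -> vec M n -> vec M n) (T : vec M k -> Prop)
  (B : vec M k -> vec M n -> Prop) (S : vec M p -> Prop) (C : vec M p -> vec M n -> Prop).
Hypotheses (hM : structure_axioms M) (dG : Def G) (dH : Def H) (dQ : Def Q)
  (dB : Def (fun z : vec M (k + n) => T (lpart z) /\ B (lpart z) (rpart z)))
  (dS : Def S)
  (dC : Def (fun z : vec M (p + n) => S (lpart z) /\ C (lpart z) (rpart z)))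
  (dmul : Def (fun z : vec M ((n + n) + n) => (G (lpart (lpart z)) /\ G (rpart (lpart z)))
            /\ forall i, rpart z i = mul (lpart (lpart z)) (rpart (lpart z)) i)).

Lemma def_mul N (s1 s2 s3 : 'I_n -> 'I_N) :
  Def (fun x : vec M N => (G (fun i => x (s1 i)) /\ G (fun i => x (s2 i))) /\
       forall i, x (s3 i) = mul (fun i => x (s1 i)) (fun i => x (s2 i)) i).
Proof.
apply: (defE hM) (@def_pre2 M hM N (n + n) n
   (fun u w => (G (lpart u) /\ G (rpart u)) /\ forall i, w i = mul (lpart u) (rpart u) i)
   (comb s1 s2) s3 dmul) _ => x.
by rewrite lpart_comb rpart_comb.
Qed.

Lemma def_B N (s1 : 'I_k -> 'I_N) (s2 : 'I_n -> 'I_N) :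
  Def (fun x : vec M N => T (fun i => x (s1 i)) /\ B (fun i => x (s1 i)) (fun i => x (s2 i))).
Proof. exact: (@def_pre2 M hM N k n (fun u w => T u /\ B u w) s1 s2 dB). Qed.

Lemma def_C N (s1 : 'I_p -> 'I_N) (s2 : 'I_n -> 'I_N) :
  Def (fun x : vec M N => S (fun i => x (s1 i)) /\ C (fun i => x (s1 i)) (fun i => x (s2 i))).
Proof. exact: (@def_pre2 M hM N p n (fun u w => S u /\ C u w) s1 s2 dC). Qed.

Definition Dset (s : vec M p) (q : vec M n) :=
  Q q /\ forall t, T t /\ B t q -> exists m,
    (exists h, H h /\ exists c, (S s /\ C s c) /\ ((G h /\ G c) /\ forall i, m i = mul h c i))
    /\ (T t /\ B t m).

Ltac atom := first
  [ exact: def_mul | exact: def_B | exact: def_C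
  | exact: (def_sel hM _ dG) | exact: (def_sel hM _ dH) | exact: (def_sel hM _ dQ)
  | exact: (def_sel hM _ dS) | exact: (def_cst hM _ _) ].
Ltac step := first
  [ atom | progress rewrite /lpart /rpart /= | apply: (def_and hM) | apply: (def_imp hM) | apply: (def_exv hM) | apply: (def_allv hM) ].

Lemma def_D : Def (fun z : vec M (p + n) => S (lpart z) /\ Dset (lpart z) (rpart z)).
Proof.
rewrite /Dset /lpart /rpart /=.
repeat step.
Qed.

Definition Wset (q : vec M n) (w : vec M (p + k)) :=
  S (lpart w) /\ exists z, z = q /\ (T (rpart w) /\ B (rpart w) z).
Definition Aset (w : vec M (p + k)) (y : vec M n) :=
  exists u, exists c, (T (rpart w) /\ B (rpart w) u) /\ (S (lpart w) /\ C (lpart w) c)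
    /\ ((G y /\ G u) /\ forall i, c i = mul y u i).
Definition Eset (w : vec M (p + k)) (h : vec M n) :=
  H h /\ forall t0, T t0 /\ B t0 h -> exists y, (T t0 /\ B t0 y) /\ H y /\ Aset w y.

Lemma def_W q : Def (Wset q).
Proof. rewrite /Wset /lpart /rpart /=. repeat step. Qed.

Lemma def_E q : Def (fun z : vec M ((p + k) + n) => Wset q (lpart z) /\ Eset (lpart z) (rpart z)).
Proof. rewrite /Wset /Eset /Aset /lpart /rpart /=. repeat step. Qed.

End Defn.

Theorem theorem5p7 (M : ostructure) (n k : nat)
    (G H : vec M n -> Prop)
    (mul : vec M n -> vec M n -> vec M n) (inv : vec M n -> vec M n) (e : vec M n)
    (T : vec M k -> Prop) (B : vec M k -> vec M n -> Prop) :
  DCLOM M ->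
  is_def_topgroup G mul inv e T B ->
  is_def_normal_subgroup G H mul inv e ->
  def_compact H (rel_open G H T B) ->
  (exists Q, def_transversal G H Q mul /\ def_compact Q (quot_open G H Q mul T B)) ->
  def_compact G (bopen G T B).
Proof.
move=> hD tg nsg HC [Q [tr QC]].
case: hD => _ _ hM _ _.
case: tg => [[dG grp dmulm dinvm base] [cmul cinv]].
case: grp => [[Ge Gmul Ginv] [assoc unit invax]].
case: base => [[dT dB] BG cover inter].
case: nsg => [[dH HG He] [Hmul Hinv Hconj]].
case: tr => [dQ QG trv].
case: dmulm => _ dmul.
move=> p S C [dS dC] neS clo neC filt.
have Bop : forall t, T t -> bopen G T B (B t).
  move=> t Tt; split; first by move=> x; exact: BG Tt.
  move=> x Btx; case: (inter t t x Tt Tt Btx Btx) => r [Tr [Brx sub]].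
  by exists r; split=> //; split=> // y /sub [].
have ltc : forall a x W, G a -> G x -> bopen G T B W -> W (mul a x) ->
    exists t, T t /\ B t x /\ forall y, B t y -> W (mul a y).
  move=> a x W Ga Gx oW Wax; case: (cmul a x Ga Gx W oW Wax) => U [V [oU oV Ua Vx UV]].
  case: oV => _ /(_ x Vx) [t [Tt [Btx sub]]]; exists t; do 2 split=> //.
  by move=> y By; apply: UV Ua (sub y By).
have CG : forall s c, S s -> C s c -> G c by move=> s c Ss; exact: (clo s Ss).1.
pose cl s q := forall t, T t -> B t q -> exists h c, H h /\ C s c /\ B t (mul h c).
pose D := Dset G H Q mul T B S C.
have hDiff : forall s q, S s -> (D s q <-> Q q /\ cl s q).
  move=> s q Ss; split.
    case=> Qq f; split=> // t Tt Btq.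
    case: (f t (conj Tt Btq)) => m [[h [Hh [c [[_ Cc] [_ meq]]]]] [_ Bm]].
    exists h, c; split=> //; split=> //.
    have <- : m = mul h c by apply: functional_extensionality.
    done.
  case=> Qq f; split=> // t [Tt Btq]; case: (f t Tt Btq) => h [c [Hh [Cc Bm]]].
  exists (mul h c); split=> //; exists h; split=> //; exists c; split=> //.
  by split=> //; split; [exact: HG | exact: CG Cc].
have ncl : forall s q, ~ cl s q ->
    exists t, T t /\ B t q /\ forall h c, H h -> C s c -> ~ B t (mul h c).
  move=> s0 q0 nc; apply: NNPP => nx; apply: nc => t Tt Btq; apply: NNPP => ny.
  apply: nx; exists t; do 2 split=> //; move=> h c Hh Cc Bm; apply: ny; by exists h, c.
have dfamD : def_family S D.
  split=> //; by apply: def_D.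
have [q [Qq Dq]] : exists q, Q q /\ forall s, S s -> D s q.
  apply: QC dfamD neS _ _ _.
  - move=> s Ss; split; first by move=> x [].
    split; first by move=> x [].
    rewrite /bopen; split; first by move=> g [Gg _].
    move=> g [Gg [q0 [Qq0 [_ nD] [h [Hh eq0]]]]].
    have nc : ~ cl s q0 by move=> c; apply: nD; apply/(hDiff _ _ Ss).
    have [t0 [Tt0 [Bt0 nt]]] := ncl _ _ nc.
    have Gh := HG h Hh.
    have [t' [Tt' [Bt'g sub]]] := ltc h g (B t0) Gh Gg (Bop t0 Tt0) ltac:(by rewrite -eq0).
    exists t'; do 2 split=> //; move=> y By; have Gy := BG t' y Tt' By; split=> //.
    case: (trv y Gy) => q' [Qq' [h'' [Hh'' eqq']] _].
    exists q'; split=> //; last by exists h''.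
    split=> // Dq'; have [_ cl'] := (hDiff _ _ Ss).1 Dq'.
    have Gh'' := HG h'' Hh''.
    have Ha : H (mul h (inv h'')) by apply: Hmul => //; apply: Hinv.
    have Ga := HG _ Ha.
    have Gq' := QG q' Qq'.
    have aq : mul (mul h (inv h'')) q' = mul h y.
      have Gi := Ginv _ Gh''.
      rewrite eqq' -(assoc _ _ _ Gh Gi (Gmul _ _ Gh'' Gy)) (assoc _ _ _ Gi Gh'' Gy).
      by rewrite (invax _ Gh'').1 (unit _ Gy).1.
    have [t'' [Tt'' [Bt''q' sub2]]] := ltc _ q' (B t0) Ga Gq' (Bop t0 Tt0)
       ltac:(by rewrite aq; apply: sub).
    case: (cl' t'' Tt'' Bt''q') => h1 [c [Hh1 [Cc Bm]]].
    have Gh1 := HG _ Hh1; have Gc := CG _ _ Ss Cc.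
    have := sub2 _ Bm; rewrite (assoc _ _ _ Ga Gh1 Gc).
    by apply: nt => //; apply: Hmul.
  - move=> s Ss; case: (neC s Ss) => c Cc.
    case: (trv c (CG _ _ Ss Cc)) => q0 [Qq0 [h [Hh eq0]] _].
    exists q0; apply/(hDiff _ _ Ss); split=> // t Tt Btq; exists h, c; by rewrite -eq0.
  - move=> s s' Ss Ss'; case: (filt s s' Ss Ss') => r [Sr sub]; exists r; split=> //.
    move=> x [Qx f]; split; split=> // t Ht; case: (f t Ht) => m [[h [Hh [c [[_ Cc] rest]]]] Bm];
      exists m; split=> //; exists h; split=> //; exists c; split=> //; split=> //.
    + exact: (sub c Cc).1.
    + exact: (sub c Cc).2.
have Gq := QG q Qq.
pose W := Wset T B S q.
pose E := Eset G H mul T B S C.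
have [h0 [Hh0 Eh]] : exists h, H h /\ forall w, W w -> E w h.
  apply: (HC (p + k) W E).
  - split; first by apply: def_W.
    by apply: def_E.
  - case: neS => s0 Ss0; case: (cover q Gq) => t [Tt Btq].
    exists (concat s0 t); rewrite /W /Wset lpart_concat rpart_concat; split=> //; by exists q.
  - move=> w Ww; split; first by move=> x [].
    exists (fun x => G x /\ exists t0, T t0 /\ B t0 x /\
                 forall y, B t0 y -> H y -> ~ Aset G mul T B S C w y).
    split.
      split; first by move=> x [].
      move=> x [Gx [t0 [Tt0 [Bx f]]]]; exists t0; do 2 split=> //.
      move=> y By; split; first exact: BG Tt0 By.
      by exists t0.
    move=> x; split.
      move=> [Hx nE]; split=> //; split; first exact: HG.
      apply: NNPP => c; apply: nE; split=> // t0 [Tt0 Bt0]; apply: NNPP => c2; apply: c.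
      exists t0; do 2 split=> //; move=> y By Hy Ay; apply: c2; exists y; by do 2 split.
    move=> [[Gx [t0 [Tt0 [Bx f]]]] Hx]; split=> //; case=> _ g.
    case: (g t0 (conj Tt0 Bx)) => y [[_ By] [Hy Ay]]; exact: f y By Hy Ay.
  - move=> w [Sw [z [-> [Tt Btq]]]].
    have [_ clq] := (hDiff _ _ Sw).1 (Dq _ Sw).
    case: (clq _ Tt Btq) => h [c [Hh [Cc Bm]]].
    have Gh := HG h Hh; have Gc := CG _ _ Sw Cc; have Gi := Ginv _ Gh.
    exists (inv h); split; first exact: Hinv.
    move=> t0 [Tt0 Bt0]; exists (inv h); split=> //; split; first exact: Hinv.
    exists (mul h c), c; split=> //; split=> //; split; first by split=> //; apply: Gmul.
    by move=> i; rewrite (assoc _ _ _ Gi Gh Gc) (invax _ Gh).1 (unit _ Gc).1.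
  - move=> w1 w2 [S1 [z1 [-> [T1 B1]]]] [S2 [z2 [-> [T2 B2]]]].
    case: (filt _ _ S1 S2) => r [Sr subr].
    case: (inter _ _ q T1 T2 B1 B2) => t3 [T3 [B3 sub3]].
    exists (concat r t3); rewrite /W /E /Wset /Eset /Aset lpart_concat rpart_concat.
    split; first by split=> //; exists q.
    move=> x [Hx f]; split; split=> // t0 Ht0; case: (f t0 Ht0) =>
      y [By [Hy [u [c [[_ Bu] [[_ Cc] rest]]]]]]; exists y; do 2 split=> //;
      exists u, c; split; (try split) => //.
    + exact: (sub3 u Bu).1.
    + by split=> //; exact: (subr c Cc).1.
    + exact: (sub3 u Bu).2.
    + by split=> //; exact: (subr c Cc).2.
have Gh0 := HG _ Hh0.
have Gx := Gmul _ _ Gh0 Gq.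
exists (mul h0 q); split=> // s Ss; apply: NNPP => nC.
case: (clo s Ss) => [CGs [_ op]].
case: (op _ (conj Gx nC)) => t [Tt [Btx subt]].
case: (cmul h0 q Gh0 Gq (B t) (Bop t Tt) Btx) => U [V [oU oV Uh Vq UV]].
case: oV => _ /(_ q Vq) [t1 [T1 [B1q sub1]]].
case: oU => _ /(_ h0 Uh) [t0 [T0 [B0h sub0]]].
have EW : E (concat s t1) h0.
  by apply: Eh; rewrite /W /Wset lpart_concat rpart_concat; split=> //; exists q.
move: EW; rewrite /E /Eset /Aset lpart_concat rpart_concat => -[_ g].
case: (g t0 (conj T0 B0h)) => y [[_ By] [Hy [u [c [[_ Bu] [[_ Cc] [_ ceq]]]]]]].
have := UV y u (sub0 y By) (sub1 u Bu).
have -> : mul y u = c by apply: functional_extensionality => i; rewrite ceq.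
by move/subt => [].
Qed.
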